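(* Let $A=\{a_1,\dots,a_n\}$ with $n\ge2$. Then $CT(A^{\ast})/I_f(A^{\ast})\cong C_n$.
   Context: $A^{\ast}$ is the free monoid on $A$; $A^{\omega}$ is the set of right-infinite strings over $A$. For $x,y\in A^\ast$, $x\le_p y$ if $x=yz$ for some $z$; a prefix code is a set of pairwise $\le_p$-incomparable strings. A definite language is $X\cup YA^{\ast}$ with $X,Y$ finite; $x\in L$ is unbounded if $xA^{\ast}\subseteq L$, bounded otherwise. A permissible map is a bijection between definite languages preserving boundedness and unboundedness with $\alpha(xy)=\alpha(x)y$ for unbounded $x$ and all $y\in A^\ast$. $CT(A^{\ast})$ is the set of permissible maps (an inverse monoid of partial bijections of $A^\ast$; it is a Boolean inverse $\wedge$-monoid). $I_f(A^{\ast})$ is the set of all bijections between finite subsets of $A^{\ast}$, an additive ideal of $CT(A^{\ast})$ (a semigroup ideal closed under joins of compatible pairs). For a Boolean inverse $\wedge$-semigroup $S$ and additive ideal $I$, $S/I$ denotes $S/\varepsilon_I$ where $(a,b)\in\varepsilon_I$ iff $a\setminus(a\wedge b)\in I$ and $b\setminus(a\wedge b)\in I$; here for $c\le a$, $a\setminus c=a(\mathbf{d}(a)\setminus\mathbf{d}(c))$ with $\mathbf{d}(a)=a^{-1}a$ and $\setminus$ on idempotents the Boolean relative complement. The Cuntz inverse monoid $C_n$ consists of all bijections $f\colon XA^{\omega}\to YA^{\omega}$, with $X,Y$ finite prefix codes, for which there is a bijection $f_1\colon X\to Y$ with $f(xw)=f_1(x)w$ for all $x\in X$, $w\in A^{\omega}$,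 under composition of partial bijections of $A^\omega$. *)

(* Defs.v *)
From mathcomp Require Import all_boot.
Set Implicit Arguments. Unset Strict Implicit. Unset Printing Implicit Defensive.

(* Alphabet A = {a_1,...,a_n} is 'I_n.  A^* = seq 'I_n,  A^omega = nat -> 'I_n. *)
Definition word (n : nat) := seq 'I_n.
Definition stream (n : nat) := nat -> 'I_n.

Definition pfun (T : Type) := T -> option T.

Definition pcompose {T : Type} (f g : pfun T) : pfun T := fun x => obind f (g x).

Definition peq {T : Type} (f g : pfun T) : Prop := forall x, f x = g x.

Definition pinj {T : Type} (f : pfun T) : Prop :=
  forall x x' y, f x = Some y -> f x' = Some y -> x = x'.
Definition pdom {T : Type} (f : pfun T) : T -> Prop := fun x => f x <> None.
Definition pran {T : Type} (f : pfun T) : T -> Prop := fun y => exists x, f x = Some y.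

Definition definite n (L : word n -> Prop) : Prop :=
  exists X Y : seq (word n),
    forall w, L w <-> (w \in X \/ exists2 y, y \in Y & prefix y w).

Definition unbounded n (L : word n -> Prop) (x : word n) : Prop :=
  forall z, L (x ++ z).

Definition CT n (a : pfun (word n)) : Prop :=
  [/\ pinj a, definite (pdom a), definite (pran a),
      (forall x y, a x = Some y -> (unbounded (pdom a) x <-> unbounded (pran a) y))
    & (forall x y, a x = Some y -> unbounded (pdom a) x ->
         forall z, a (x ++ z) = Some (y ++ z))].

Definition Ifin n (a : pfun (word n)) : Prop :=
  [/\ pinj a, (exists s : seq (word n), forall x, pdom a x -> x \in s)
    & (exists s : seq (word n), forall y, pran a y -> y \in s)].

Definition pmeet n (a b : pfun (word n)) : pfun (word n) :=
  fun x => if a x == b x then a x else None.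
Definition pdiff n (a c : pfun (word n)) : pfun (word n) :=
  fun x => if c x is Some _ then None else a x.

Definition epsIf n (a b : pfun (word n)) : Prop :=
  Ifin (pdiff a (pmeet a b)) /\ Ifin (pdiff b (pmeet a b)).

Definition scat n (x : word n) (w : stream n) : stream n :=
  fun k => if k < size x then nth (w 0) x k else w (k - size x).

Definition prefix_code n (X : seq (word n)) : Prop :=
  forall x y, x \in X -> y \in X -> prefix x y -> x = y.

Definition Cuntz n (f : pfun (stream n)) : Prop :=
  exists (X Y : seq (word n)) (f1 : word n -> word n),
    [/\ prefix_code X /\ prefix_code Y,
        {in X &, injective f1},
        (forall y, y \in Y <-> exists2 x, x \in X & f1 x = y),
        (forall x w, x \in X -> f (scat x w) = Some (scat (f1 x) w))
      & (forall w, f w <> None -> exists x w', x \in X /\ w = scat x w')].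

(* Main.v *)
Require Import Defs.
From mathcomp Require Import all_boot.
From mathcomp Require Import zify.
From Stdlib Require Import ClassicalEpsilon FunctionalExtensionality.
Set Implicit Arguments. Unset Strict Implicit. Unset Printing Implicit Defensive.

Section Basics.
Variable n : nat.
Implicit Types (x y r : word n) (s w : stream n).

Definition pre k w : word n := mkseq w k.
Definition sdrop k w : stream n := fun i => w (k + i).

Lemma pre_scat x s : pre (size x) (scat x s) = x.
Proof.
apply: (@eq_from_nth _ (s 0)); rewrite /pre size_mkseq // => i Hi.
by rewrite nth_mkseq // /scat Hi.
Qed.

Lemma sdrop_scat x s : sdrop (size x) (scat x s) = s.
Proof.
apply: functional_extensionality => i; rewrite /sdrop /scat.
have -> : (size x + i < size x) = false by lia.
by rewrite addKn.
Qed.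

Lemma scat_cat x r s : scat (x ++ r) s = scat x (scat r s).
Proof.
apply: functional_extensionality => k; rewrite /scat size_cat nth_cat.
case: (ltnP k (size x)) => Hk.
  have -> : k < size x + size r by lia.
  by apply: set_nth_default.
case: (ltnP (k - size x) (size r)) => Hk2.
  have -> : k < size x + size r by lia.
  by apply: set_nth_default.
have -> : (k < size x + size r) = false by lia.
by rewrite subnDA.
Qed.

Lemma scat_pre_sdrop k s : scat (pre k s) (sdrop k s) = s.
Proof.
apply: functional_extensionality => i; rewrite /scat /pre /sdrop size_mkseq.
case: ltnP => Hi; first by rewrite nth_mkseq.
by rewrite subnKC.
Qed.

Lemma size_pre k s : size (pre k s) = k.
Proof. by rewrite size_mkseq. Qed.

Lemma scat_inj x s s' : scat x s = scat x s' -> s = s'.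
Proof. by move=> H; rewrite -(sdrop_scat x s) H sdrop_scat. Qed.

Lemma scat_nil s : scat [::] s = s.
Proof. by apply: functional_extensionality => i; rewrite /scat /= subn0. Qed.

Lemma scat_split_le x s x' s' : scat x s = scat x' s' -> size x <= size x' ->
  exists r, x' = x ++ r /\ s = scat r s'.
Proof.
move=> H Hle; set d := size x' - size x.
exists (pre d s).
have E : scat x s = scat (x ++ pre d s) (sdrop d s) by rewrite scat_cat scat_pre_sdrop.
have Hs : size (x ++ pre d s) = size x' by rewrite size_cat size_pre /d; lia.
have E1 : x ++ pre d s = x'.
  by rewrite -(pre_scat (x ++ pre d s) (sdrop d s)) -E H Hs pre_scat.
split; first by [].
rewrite -{1}(scat_pre_sdrop d s); congr scat.
apply: (@scat_inj x'); rewrite -H E E1 //.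
Qed.

Lemma scat_split x s x' s' : scat x s = scat x' s' ->
  (exists r, x' = x ++ r /\ s = scat r s') \/ (exists r, x = x' ++ r /\ s' = scat r s).
Proof.
move=> H; case: (leqP (size x) (size x')) => Hl.
  by left; apply: scat_split_le.
by right; apply: scat_split_le => //; lia.
Qed.

Lemma cat_split x z x' z' : x ++ z = x' ++ z' ->
  (exists r, x' = x ++ r /\ z = r ++ z') \/ (exists r, x = x' ++ r /\ z' = r ++ z).
Proof.
elim: x x' => [|a x IH] [|a' x'] /=.
- by move=> ->; left; exists [::].
- by move=> ->; left; exists (a' :: x').
- by move=> <-; right; exists (a :: x).
- case=> -> /IH [[r [-> ->]]|[r [-> ->]]]; [left|right]; by exists r.
Qed.


Definition Pprop (a : pfun (word n)) : Prop :=
  forall x y, a x = Some y -> unbounded (pdom a) x -> forall z, a (x ++ z) = Some (y ++ z).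

Definition Phi (a : pfun (word n)) : pfun (stream n) := fun w =>
  match excluded_middle_informative
          (exists p : word n * stream n, w = scat p.1 p.2 /\ unbounded (pdom a) p.1) with
  | left H => let p := proj1_sig (constructive_indefinite_description _ H) in
      match a p.1 with Some y => Some (scat y p.2) | None => None end
  | right _ => None
  end.

Lemma ub_def (a : pfun (word n)) x : unbounded (pdom a) x -> exists y, a x = Some y.
Proof.
move=> H; have := H [::]; rewrite cats0 /pdom.
by case: (a x) => [y|] // _; exists y.
Qed.

Lemma ub_ext (a : pfun (word n)) x r : unbounded (pdom a) x -> unbounded (pdom a) (x ++ r).
Proof. by move=> H z; rewrite -catA. Qed.

Lemma Phi_spec a x y s : Pprop a -> unbounded (pdom a) x -> a x = Some y ->
  Phi a (scat x s) = Some (scat y s).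
Proof.
move=> Pa Hu Hx; rewrite /Phi.
case: excluded_middle_informative => [H|H]; last first.
  by exfalso; apply: H; exists (x, s).
case: (constructive_indefinite_description _ H) => [[x' s']] /= [E Hu'].
case: (scat_split E) => [[r [-> ->]]|[r [Ex Es']]].
  by rewrite (Pa _ _ Hx Hu) scat_cat.
have [y' Hy'] := ub_def Hu'.
rewrite Hy'; move: Hx; rewrite Ex (Pa _ _ Hy' Hu') => -[<-].
by rewrite Es' scat_cat.
Qed.

Lemma Phi_inv a w v : Phi a w = Some v ->
  exists x s y, [/\ w = scat x s, unbounded (pdom a) x, a x = Some y & v = scat y s].
Proof.
rewrite /Phi; case: excluded_middle_informative => [H|//].
case: (constructive_indefinite_description _ H) => [[x' s']] /= [E Hu'].
case Ha: (a x') => [y|] // [<-].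
by exists x', s', y.
Qed.

Lemma Phi_none a w : (forall x s, w = scat x s -> ~ unbounded (pdom a) x) -> Phi a w = None.
Proof.
move=> H; rewrite /Phi; case: excluded_middle_informative => [[[x s] /= [E U]]|//].
by exfalso; exact: (H x s E U).
Qed.

Lemma CT_P a : CT a -> Pprop a.
Proof. by case. Qed.

End Basics.
Section Hom.
Variable n : nat.
Implicit Types (a b : pfun (word n)).

Lemma ub_comp a b x : unbounded (pdom (pcompose a b)) x -> unbounded (pdom b) x.
Proof. by move=> H z; move: (H z); rewrite /pdom /pcompose; case: (b _). Qed.

Lemma P_comp a b : Pprop a -> Pprop b -> Pprop (pcompose a b).
Proof.
move=> Pa Pb x y; rewrite /pcompose.
case Hb: (b x) => [y'|] //= Ha Hu z.
have Hub := ub_comp Hu.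
have Hua : unbounded (pdom a) y'.
  move=> z'; move: (Hu z'); rewrite /pdom /pcompose (Pb _ _ Hb Hub) //.
by rewrite (Pb _ _ Hb Hub) /= (Pa _ _ Ha Hua).
Qed.

Lemma Phi_hom a b : Pprop a -> Pprop b ->
  peq (Phi (pcompose a b)) (pcompose (Phi a) (Phi b)).
Proof.
move=> Pa Pb w; have Pc := P_comp Pa Pb.
rewrite {2}/pcompose.
case Eb: (Phi b w) => [v|] /=; last first.
  apply: Phi_none => x s E Hu.
  have [y Hy] := ub_def (ub_comp Hu).
  by move: Eb; rewrite E (Phi_spec s Pb (ub_comp Hu) Hy).
have [x [s [y [Ew Hub Hby Ev]]]] := Phi_inv Eb.
case Ea: (Phi a v) => [u|]; last first.
  apply: Phi_none => x1 s1 E1 Hu1.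
  have Hub1 := ub_comp Hu1.
  have [y1 Hy1] := ub_def Hub1.
  have := Phi_spec s1 Pb Hub1 Hy1; rewrite -E1 Eb => -[Ev1].
  have Hua : unbounded (pdom a) y1.
    by move=> z; move: (Hu1 z); rewrite /pdom /pcompose (Pb _ _ Hy1 Hub1).
  have [y2 Hy2] := ub_def Hua.
  by move: Ea; rewrite Ev1 (Phi_spec s1 Pa Hua Hy2).
have [x2 [s2 [y2 [Ev2 Hua Hay Eu]]]] := Phi_inv Ea.
move: Ev2; rewrite Ev => E.
case: (scat_split E) => [[r [Ex2 Es]]|[r [Ey Es2]]].
- have Hu : unbounded (pdom (pcompose a b)) (x ++ r).
    move=> z; rewrite /pdom /pcompose -catA (Pb _ _ Hby Hub) /= catA -Ex2.
    exact: Hua.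
  have Hc : pcompose a b (x ++ r) = Some y2.
    by rewrite /pcompose (Pb _ _ Hby Hub) /= -Ex2.
  by rewrite Ew Es -scat_cat (Phi_spec s2 Pc Hu Hc) Eu.
- have Hu : unbounded (pdom (pcompose a b)) x.
    move=> z; rewrite /pdom /pcompose (Pb _ _ Hby Hub) /= Ey -catA.
    exact: Hua.
  have Hc : pcompose a b x = Some (y2 ++ r).
    by rewrite /pcompose Hby /= Ey (Pa _ _ Hay Hua).
  by rewrite Ew (Phi_spec s Pc Hu Hc) Eu Es2 scat_cat.
Qed.

End Hom.
Section Kernel.
Variable n : nat.
Implicit Types (a b : pfun (word n)) (x y r : word n) (s w : stream n).

Definition mx (l : seq (word n)) := foldr (fun t m => maxn (size t) m) 0 l.
Lemma mx_ge l t : t \in l -> size t <= mx l.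
Proof.
elim: l => //= u l IH; rewrite in_cons => /orP[/eqP->|/IH]; lia.
Qed.

Fixpoint words k : seq (word n) :=
  if k is k'.+1 then flatten [seq [seq i :: u | u <- words k'] | i <- enum 'I_n]
  else [:: [::]].
Lemma words_mem x : x \in words (size x).
Proof.
elim: x => [|i x IH] //=.
apply/flattenP; exists [seq i :: u | u <- words (size x)].
  by apply/mapP; exists i; rewrite ?mem_enum.
by apply/mapP; exists x.
Qed.
Definition words_lt M := flatten [seq words k | k <- iota 0 M].
Lemma words_lt_mem M x : size x < M -> x \in words_lt M.
Proof.
move=> H; apply/flattenP; exists (words (size x)); last exact: words_mem.
by apply/mapP; exists (size x); rewrite // mem_iota; lia.
Qed.

Lemma pdiffE a b x : pdiff a (pmeet a b) x = if a x == b x then None else a x.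
Proof. by rewrite /pdiff /pmeet; case: eqP => [->|//]; case: (b x). Qed.
Lemma pdiffE2 a b x : pdiff b (pmeet a b) x = if a x == b x then None else b x.
Proof. by rewrite /pdiff /pmeet; case: eqP => [->|//]; case: (b x). Qed.

Lemma eps_agree a b : epsIf a b -> exists M, forall x, M <= size x -> a x = b x.
Proof.
case=> [[_ [s1 H1] _] [_ [s2 H2] _]].
exists (mx (s1 ++ s2)).+1 => x Hx.
case E: (a x == b x); first by apply/eqP.
exfalso.
case Ea: (a x) => [y|].
  have : x \in s1 by apply: H1; rewrite /pdom pdiffE E Ea.
  by move=> Hm; have := @mx_ge (s1 ++ s2) x; rewrite mem_cat Hm => /(_ isT) Hle; by rewrite ltnNge Hle in Hx.
case Eb: (b x) => [y|]; last by move: E; rewrite Ea Eb.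
have : x \in s2.
  by apply: H2; rewrite /pdom pdiffE2 E Eb.
by move=> Hm; have := @mx_ge (s1 ++ s2) x; rewrite mem_cat Hm orbT => /(_ isT) Hle; by rewrite ltnNge Hle in Hx.
Qed.

Lemma agree_Phi1 a b M w v : (forall x, M <= size x -> a x = b x) ->
  Pprop a -> Pprop b -> Phi a w = Some v -> Phi b w = Some v.
Proof.
move=> Hab Pa Pb /Phi_inv [x [s [y [-> Hu Hy ->]]]].
set r := pre M s.
have Hsz : forall z, M <= size ((x ++ r) ++ z).
  by move=> z; rewrite !size_cat size_pre; lia.
have Hub : unbounded (pdom b) (x ++ r).
  by move=> z; rewrite /pdom -Hab // -catA; apply: Hu.
have Hb : b (x ++ r) = Some (y ++ r).
  by rewrite -Hab ?(Pa _ _ Hy Hu) // -(cats0 (x ++ r)).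
have := Phi_spec (sdrop M s) Pb Hub Hb.
by rewrite !scat_cat scat_pre_sdrop.
Qed.

Lemma eps_peq a b : Pprop a -> Pprop b -> epsIf a b -> peq (Phi a) (Phi b).
Proof.
move=> Pa Pb /eps_agree [M HM] w.
case Ea: (Phi a w) => [v|].
  by rewrite (agree_Phi1 HM Pa Pb Ea).
case Eb: (Phi b w) => [v|] //.
have HM' : forall x, M <= size x -> b x = a x by move=> x /HM ->.
by rewrite (agree_Phi1 HM' Pb Pa Eb) in Ea.
Qed.

Lemma scat_eq_all (hn : 2 <= n) y y' : (forall s, scat y s = scat y' s) -> y = y'.
Proof.
have key : forall y y', size y <= size y' -> (forall s, scat y s = scat y' s) -> y = y'.
  move=> {}y {}y' Hle H.
  have [r [Ey' _]] := scat_split_le (H (fun _ => Ordinal (ltnW hn))) Hle.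
  case: r Ey' => [|i r] Ey'; first by rewrite Ey' cats0.
  exfalso.
  pose j : 'I_n := if val i == 0 then Ordinal hn else Ordinal (ltnW hn).
  have Hs := H (fun _ => j); rewrite Ey' scat_cat in Hs.
  have := scat_inj Hs => /(congr1 (fun f => f 0)); rewrite /scat /=.
  rewrite /j; case: eqP => Hi Hij.
    by move: Hi; rewrite -Hij.
  by apply: Hi; rewrite -Hij.
move=> H; case: (leqP (size y) (size y')) => Hl; first exact: key.
by symmetry; apply: key; [lia | move=> s; rewrite H].
Qed.

Lemma prefix_take_le y x r : prefix y (x ++ r) -> size y <= size x -> prefix y x.
Proof.
rewrite !prefixE => /eqP E Hle; apply/eqP; by rewrite -{2}E takel_cat.
Qed.

Lemma peq_key (hn : 2 <= n) a b : CT a -> CT b -> peq (Phi a) (Phi b) ->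
  exists M, forall x y, M <= size x -> a x = Some y -> b x = Some y.
Proof.
move=> CTa CTb Hpeq; have Pa := CT_P CTa; have Pb := CT_P CTb.
case: CTa => _ [X0a [Y0a HDa]] _ _ _.
case: CTb => _ [X0b [Y0b HDb]] _ _ _.
set L := X0a ++ Y0a ++ X0b ++ Y0b.
exists (mx L).+1 => x y Hx Hy.
have small : forall t, t \in L -> size t < (mx L).+1 by move=> t /mx_ge.
have [y0 Y0y0 Py0] : exists2 y0, y0 \in Y0a & prefix y0 x.
  have : pdom a x by rewrite /pdom Hy.
  move/HDa => [Hm|//]; exfalso.
  have := small x; rewrite /L !mem_cat Hm => /(_ isT) H; by rewrite ltnNge Hx in H.
have Hua : unbounded (pdom a) x.
  move=> z; apply/HDa; right; exists y0 => //; exact: prefix_catl.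
have HPa : forall s, Phi b (scat x s) = Some (scat y s).
  by move=> s; rewrite -Hpeq (Phi_spec s Pa Hua Hy).
have Hub : unbounded (pdom b) x.
  have [x2 [s2 [y2 [E2 Hu2 Hy2 _]]]] := Phi_inv (HPa (fun _ => Ordinal (ltnW hn))).
  case: (scat_split E2) => [[r [Ex2 _]]|[r [Ex _]]]; last by rewrite Ex; apply: ub_ext.
  have : pdom b x2 by rewrite /pdom Hy2.
  move/HDb => [Hm|[y1 Y1 Py1]].
    exfalso; have := small x2; rewrite /L !mem_cat Hm !orbT => /(_ isT).
    rewrite Ex2 size_cat => H; have : (mx L).+1 <= size x + size r by apply: leq_trans Hx (leq_addr _ _).
    by rewrite leqNgt H.
  have Hs1 : size y1 <= size x.
    have := small y1; rewrite /L !mem_cat Y1 !orbT => /(_ isT) H; rewrite ltnS in H; exact: leq_trans H (ltnW Hx).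
  move: Py1; rewrite Ex2 => /prefix_take_le /(_ Hs1) Py1.
  move=> z; apply/HDb; right; exists y1 => //; exact: prefix_catl.
have [y' Hy'] := ub_def Hub.
suff -> : y = y' by [].
apply: scat_eq_all => // s.
by have := Phi_spec s Pb Hub Hy'; rewrite HPa => -[].
Qed.

Lemma peq_Ifin (hn : 2 <= n) a b : CT a -> CT b -> peq (Phi a) (Phi b) ->
  Ifin (pdiff a (pmeet a b)).
Proof.
move=> CTa CTb Hpeq; have [M HM] := peq_key hn CTa CTb Hpeq.
have inja : pinj a by case: CTa.
have Hdom : forall x, pdom (pdiff a (pmeet a b)) x -> x \in words_lt M.
  move=> x; rewrite /pdom pdiffE.
  case E: (a x == b x) => //; case Ea: (a x) => [y|] // _.
  apply: words_lt_mem; rewrite ltnNge; apply/negP => Hs.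
  by move: E; rewrite Ea (HM _ _ Hs Ea) eqxx.
split.
- move=> x x' y; rewrite !pdiffE.
  case: (a x == b x) => //; case: (a x' == b x') => //; exact: inja.
- by exists (words_lt M).
- exists (pmap a (words_lt M)) => y [x Hx].
  have Hd : pdom (pdiff a (pmeet a b)) x by rewrite /pdom Hx.
  move: Hx; rewrite pdiffE; case: (a x == b x) => // Ha.
  by rewrite mem_pmap; apply/mapP; exists x => //; apply: Hdom.
Qed.
End Kernel.

Section CuntzPart.
Variable n : nat.
Implicit Types (a b : pfun (word n)) (x y r : word n) (s w : stream n).

Definition ubb a x : bool :=
  if excluded_middle_informative (unbounded (pdom a) x) then true else false.
Lemma ubbP a x : reflect (unbounded (pdom a) x) (ubb a x).
Proof. by rewrite /ubb; case: excluded_middle_informative => H; constructor. Qed.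

Definition minimal a x := all (fun k => ~~ ubb a (take k x)) (iota 0 (size x)).

Lemma CT_Cuntz a : CT a -> Cuntz (Phi a).
Proof.
move=> CTa; have Pa := CT_P CTa.
case: CTa => inja [X0 [Y0 HD]] _ _ _.
pose Xc := [seq x <- X0 ++ Y0 | ubb a x && minimal a x].
pose f1 x := odflt x (a x).
have Hf1 : forall x, x \in Xc -> a x = Some (f1 x).
  move=> x; rewrite mem_filter => /andP[/andP[/ubbP /ub_def [y Hy] _] _].
  by rewrite /f1 Hy.
have Hub : forall x, x \in Xc -> unbounded (pdom a) x.
  by move=> x; rewrite mem_filter => /andP[/andP[/ubbP ? _] _].
have pcX : prefix_code Xc.
  move=> x x' Hx Hx'; rewrite prefixE => /eqP E.
  case: (ltnP (size x) (size x')) => Hs; last by rewrite -E take_oversize.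
  exfalso; move: Hx'; rewrite mem_filter => /andP[/andP[_ /allP /(_ (size x))]] H _.
  move: H; rewrite mem_iota add0n Hs E => /(_ isT) /negP; apply.
  exact/ubbP/Hub.
exists Xc, (map f1 Xc), f1; split.
- split=> // y y' /mapP[x Hx ->] /mapP[x' Hx' ->] /prefixP[r Er].
  have := Pa _ _ (Hf1 _ Hx) (Hub _ Hx) r; rewrite -Er -(Hf1 _ Hx') => E.
  have Ex : x ++ r = x' by apply: (inja _ _ (f1 x')); rewrite ?E Hf1.
  by rewrite (pcX x x') // -Ex prefix_prefix.
- move=> x x' Hx Hx' E; apply: (inja _ _ (f1 x)); first exact: Hf1.
  by rewrite E; apply: Hf1.
- move=> y; split; first by move/mapP=> [x Hx ->]; exists x.
  by move=> [x Hx <-]; apply: map_f.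
- by move=> x s Hx; apply: Phi_spec => //; [apply: Hub | apply: Hf1].
- move=> w; case E: (Phi a w) => [v|] // _.
  have [x [s [y [-> Hu _ _]]]] := Phi_inv E.
  have ex : exists k, ubb a (take k x) by exists (size x); rewrite take_size; apply/ubbP.
  case: (ex_minnP ex) => k Hk Hmin.
  have Hkx : k <= size x by apply: Hmin; rewrite take_size; apply/ubbP.
  exists (take k x), (scat (drop k x) s); split; last by rewrite -scat_cat cat_take_drop.
  have Hsz : size (take k x) = k by rewrite size_take_min; apply/minn_idPl.
  rewrite mem_filter Hk /=; apply/andP; split.
    apply/allP=> j; rewrite mem_iota add0n Hsz => /andP[_ Hj]; apply/negP => Hu'.
    move: Hu'; rewrite take_takel; last exact: ltnW.
    by move/Hmin; rewrite leqNgt Hj.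
  have : pdom a (take k x) by rewrite /pdom; move/ubbP: Hk => /ub_def [y' ->].
  move/HD => [Hm|[y0 Y0y0 Py0]]; first by rewrite mem_cat Hm.
  have Hs0 : size y0 <= k.
    by move: Py0; rewrite prefixE => /eqP <-; rewrite size_take_min Hsz geq_minr.
  have Ey0 : take (size y0) x = y0.
    by move: Py0; rewrite prefixE take_takel // => /eqP.
  have Hu0 : ubb a (take (size y0) x).
    apply/ubbP; rewrite Ey0 => z; apply/HD; right; exists y0 => //; exact: prefix_prefix.
  have Hk0 := Hmin _ Hu0.
  have -> : take k x = y0.
    by rewrite -Ey0; congr take; apply/eqP; rewrite eqn_leq Hs0 Hk0.
  by rewrite mem_cat Y0y0 orbT.
Qed.
End CuntzPart.

Section Surj.
Variable n : nat.
Implicit Types (x y r z : word n).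

Lemma cat_cancel x z z' : x ++ z = x ++ z' -> z = z'.
Proof. by move=> E; rewrite -(drop_size_cat z (erefl (size x))) E drop_size_cat. Qed.

Lemma pref_cmp (p q w : word n) : prefix p w -> prefix q w -> prefix p q \/ prefix q p.
Proof.
move=> /prefixP[u ->] /prefixP[u' E].
case: (cat_split E) => [[r [-> _]]|[r [-> _]]]; [left|right]; exact: prefix_prefix.
Qed.

Lemma Cuntz_surj (g : pfun (stream n)) : Cuntz g -> exists2 a, CT a & peq (Phi a) g.
Proof.
case=> X [Y [f1 [[pcX pcY] finj Yiff Hg Hdom]]].
pose a : pfun (word n) := fun w =>
  match [seq x <- X | prefix x w] with
  | x :: _ => Some (f1 x ++ drop (size x) w) | [::] => None end.
have pX : forall x x' (w : word n), x \in X -> x' \in X -> prefix x w -> prefix x' w -> x = x'.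
  move=> x x' w Hx Hx' P P'; case: (pref_cmp P P') => H.
    exact: pcX.
  by symmetry; apply: pcX.
have A1 : forall x z, x \in X -> a (x ++ z) = Some (f1 x ++ z).
  move=> x z Hx; rewrite /a.
  case E: [seq _ <- X | _] => [|x0 l].
    have : x \in [::] by rewrite -E mem_filter prefix_prefix Hx.
    by [].
  have : x0 \in x0 :: l by rewrite mem_head.
  rewrite -E mem_filter => /andP[P0 X0].
  by rewrite (pX x0 x (x ++ z)) // ?prefix_prefix // drop_size_cat.
have A2 : forall w v, a w = Some v -> exists x z, [/\ x \in X, w = x ++ z & v = f1 x ++ z].
  move=> w v; rewrite /a.
  case E: [seq _ <- X | _] => [|x0 l] // [<-].
  have : x0 \in x0 :: l by rewrite mem_head.
  rewrite -E mem_filter => /andP[/prefixP[z Ew] X0].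
  by exists x0, z; split => //; rewrite Ew drop_size_cat.
have Pa : forall w v, a w = Some v -> unbounded (pdom a) w -> forall z, a (w ++ z) = Some (v ++ z).
  move=> w v /A2 [x [z [Hx -> ->]]] _ z'; by rewrite -!catA A1.
have CTa : CT a.
  split.
  - move=> w w' v /A2 [x [z [Hx -> ->]]] /A2 [x' [z' [Hx' -> E]]].
    have Yx : f1 x \in Y by apply/Yiff; exists x.
    have Yx' : f1 x' \in Y by apply/Yiff; exists x'.
    have Ef : f1 x = f1 x'.
      case: (cat_split E) => [[r [Er _]]|[r [Er _]]].
        by apply: pcY => //; rewrite Er prefix_prefix.
      by symmetry; apply: pcY => //; rewrite Er prefix_prefix.
    have Exx := finj _ _ Hx Hx' Ef.
    by rewrite Exx; congr cat; apply: (@cat_cancel (f1 x')); rewrite -E Ef.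
  - exists [::], X => w; split.
      rewrite /pdom; case E: (a w) => [v|] // _.
      have [x [z [Hx -> _]]] := A2 _ _ E.
      by right; exists x => //; apply: prefix_prefix.
    case=> // -[x Hx /prefixP[z ->]]; by rewrite /pdom A1.
  - exists [::], Y => v; split.
      case=> w /A2 [x [z [Hx _ ->]]]; right; exists (f1 x); last exact: prefix_prefix.
      by apply/Yiff; exists x.
    case=> // -[y /Yiff [x Hx <-] /prefixP[z ->]].
    by exists (x ++ z); rewrite A1.
  - move=> w v /A2 [x [z [Hx -> ->]]]; split=> _ z'.
      by exists (x ++ (z ++ z')); rewrite A1 // catA.
    by rewrite /pdom /= -catA A1.
  - exact: Pa.
exists a => //.
move=> w; case Eg: (g w) => [u|].
  have [x [w' [Hx Ew]]] := Hdom w (ltac:(by rewrite Eg)).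
  have Hax : a x = Some (f1 x) by have := A1 x [::] Hx; rewrite !cats0.
  have Hux : unbounded (pdom a) x by move=> z; rewrite /pdom /= A1.
  by rewrite -Eg Ew Hg // (Phi_spec w' Pa Hux Hax).
case E: (Phi a w) => [v|] //.
have [x [s [y [Ew Hu Hy _]]]] := Phi_inv E.
have [x0 [z0 [Hx0 Ex _]]] := A2 _ _ Hy.
by move: Eg; rewrite Ew Ex scat_cat Hg.
Qed.

End Surj.

Theorem proposition3p17 (n : nat) (hn : 2 <= n) :
  exists Phi : pfun (word n) -> pfun (stream n),
    [/\ (forall a, CT a -> Cuntz (Phi a)),
        (forall a b, CT a -> CT b -> peq (Phi (pcompose a b)) (pcompose (Phi a) (Phi b))),
        (forall g, Cuntz g -> exists2 a, CT a & peq (Phi a) g)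
      & (forall a b, CT a -> CT b -> (epsIf a b <-> peq (Phi a) (Phi b)))].
Proof.
exists (@Phi n); split.
- exact: CT_Cuntz.
- by move=> a b Ha Hb; apply: Phi_hom; apply: CT_P.
- exact: Cuntz_surj.
- move=> a b Ha Hb; split; first by apply: eps_peq; apply: CT_P.
  move=> H; split; first exact: peq_Ifin.
  have H' : peq (Phi b) (Phi a) by move=> w; rewrite H.
  have := peq_Ifin hn Hb Ha H'.
  suff E : pdiff b (pmeet b a) = pdiff b (pmeet a b) by rewrite E.
  apply: functional_extensionality => x; rewrite pdiffE pdiffE2 eq_sym //.
Qed.
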